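(* Let $M=(m_{ij})_{1\le i,j\le 4}$ be an invertible real $4\times 4$ matrix and let $\phi$ be the associated partial map $\mathbb{R}^3\to\mathbb{R}^3$, $$\phi(\lambda_1,\lambda_2,\lambda_3)=\left(\frac{w_1}{w_4},\frac{w_2}{w_4},\frac{w_3}{w_4}\right),\qquad w=M(\lambda_1,\lambda_2,\lambda_3,1)^{T},$$ defined wherever $w_4\neq 0$. Assume: (1) $\phi$ is defined at the origin and $\phi(0)=0$; (2) $\phi$ preserves each of the three coordinate axes, i.e. for each $k\in\{1,2,3\}$, every point of the $k$-th coordinate axis at which $\phi$ is defined is mapped into the $k$-th coordinate axis; (3) $\phi$ is defined on the whole closed half-space $\{(x,y,z)\in\mathbb{R}^3: z\ge 0\}$, i.e. $(M(x,y,z,1)^T)_4\neq 0$ whenever $z\ge 0$; (4) the differential of $\phi$ at the origin is the identity: $d\phi[0;v]=v$ for all $v\in\mathbb{R}^3$. Then there exist $\lambda\in\mathbb{R}\setminus\{0\}$ and $c\ge 0$ such that $$M=\lambda\begin{pmatrix}1&0&0&0\\0&1&0&0\\0&0&1&0\\0&0&c&1\end{pmatrix},$$ so that $\phi(x,y,z)=\left(\frac{x}{cz+1},\frac{y}{cz+1},\frac{z}{cz+1}\right)$.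
   Context: Points of $\mathbb{R}^3$ are written $(x,y,z)$; the $z$-axis is interpreted as the direction in which the subject is looking. Any invertible $4\times4$ matrix induces a projective transformation of $P_3(\mathbb{R})$, and $M$ and $\lambda M$ ($\lambda\ne0$) induce the same transformation; $\phi$ above is its expression in the affine chart where the fourth homogeneous coordinate equals $1$. *)

(* Defs.v *)
From HB Require Import structures.
From mathcomp Require Import all_boot all_order all_algebra.
From mathcomp Require Import all_classical all_reals all_analysis.
Set Implicit Arguments. Unset Strict Implicit. Unset Printing Implicit Defensive.
Import Order.TTheory GRing.Theory Num.Theory.
Import numFieldNormedType.Exports.
Local Open Scope ring_scope.

Section Proj.
Variable R : realType.

(* homogeneous coordinates (x1,x2,x3,1)^T of a point x of R^3 *)
Definition hom (x : 'rV[R]_3) : 'cV[R]_4 :=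
  \col_(i < 4) (if unlift ord_max i is Some j then x 0 j else 1).

Definition wvec (M : 'M[R]_4) (x : 'rV[R]_3) : 'cV[R]_4 := M *m hom x.

Definition w4 (M : 'M[R]_4) (x : 'rV[R]_3) : R := wvec M x ord_max 0.

Definition phi_defined (M : 'M[R]_4) (x : 'rV[R]_3) : Prop := w4 M x != 0.

(* phi(x) = (w1/w4, w2/w4, w3/w4); outside its domain the value is junk
   (MathComp's x/0 = 0) and is never used by the hypotheses except through
   the differential at 0, which only depends on a neighbourhood of 0
   where phi is defined. *)
Definition phi (M : 'M[R]_4) (x : 'rV[R]_3) : 'rV[R]_3 :=
  \row_(j < 3) (wvec M x (lift ord_max j) 0 / w4 M x).

Definition on_axis (k : 'I_3) (x : 'rV[R]_3) : Prop :=
  forall j : 'I_3, j != k -> x 0 j = 0.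

Definition zidx : 'I_3 := @Ordinal 3 2 erefl.

(* the matrix [[1,0,0,0],[0,1,0,0],[0,0,1,0],[0,0,c,1]] *)
Definition Mc (c : R) : 'M[R]_4 :=
  \matrix_(i < 4, j < 4)
    (if i == j then 1
     else if (val i == 3%N) && (val j == 2%N) then c else 0).

End Proj.

(* Main.v *)
Require Import Defs.
From HB Require Import structures.
From mathcomp Require Import all_boot all_order all_algebra.
From mathcomp Require Import all_classical all_reals all_analysis.
Import Order.TTheory GRing.Theory Num.Theory.
Import numFieldNormedType.Exports.
From mathcomp Require Import ring.
Local Open Scope classical_set_scope.
Local Open Scope ring_scope.

Section S.
Variable R : realType.
Notation L := (@lift 4 ord_max).

Lemma wvecE (M : 'M[R]_4) x i :
  wvec M x i 0 = \sum_(j < 3) M i (L j) * x 0 j + M i ord_max.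
Proof.
rewrite /wvec mxE big_ord_recr /=; congr (_ + _).
  apply: eq_bigr => j _; rewrite /hom mxE.
  have -> : widen_ord (leqnSn 3) j = L j.
    by apply/val_inj; rewrite /= /bump leqNgt ltn_ord.
  by rewrite liftK.
by rewrite /hom mxE unlift_none mulr1.
Qed.

Lemma phiE (M : 'M[R]_4) x j : phi M x 0 j = wvec M x (L j) 0 / w4 M x.
Proof. by rewrite /phi mxE. Qed.

Lemma delta_sum (M : 'M[R]_4) i k t :
  \sum_(j < 3) M i (L j) * (t *: (delta_mx 0 k : 'rV[R]_3)) 0 j = M i (L k) * t.
Proof.
rewrite (bigD1 k) //= big1 ?addr0; first by rewrite !mxE !eqxx mulr1.
by move=> j /negPf jk; rewrite !mxE jk andbF mulr0 mulr0.
Qed.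

Lemma wdelta (M : 'M[R]_4) i k t :
  wvec M (t *: delta_mx 0 k) i 0 = M i (L k) * t + M i ord_max.
Proof. by rewrite wvecE delta_sum. Qed.

Lemma diag_eq (M : 'M[R]_4) i :
  M ord_max ord_max != 0 ->
  (forall j, j != i -> M (L j) (L i) = 0) ->
  (forall j, M (L j) ord_max = 0) ->
  phi M 0 = 0 ->
  differentiable (phi M) 0 -> (forall v : 'rV[R]_3, 'd (phi M) 0 v = v) ->
  M (L i) (L i) = M ord_max ord_max.
Proof.
move=> m44 Hoff Hcol phi0 dif dv.
set v : 'rV[R]_3 := delta_mx 0 i.
set a := M ord_max (L i); set m := M (L i) (L i); set d := M ord_max ord_max.
have Dv : 'D_v (phi M) 0 = v by rewrite deriveE // dv.
have der : derivable (phi M) 0 v by exact: diff_derivable.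
have Hphi h : phi M (h *: v) = (m * h / (a * h + d)) *: v.
  apply/rowP => j; rewrite phiE /w4 !wdelta !mxE.
  have [->|ji] := eqVneq j i; first by rewrite eqxx Hcol addr0 mulr1.
  by rewrite Hoff // Hcol mul0r addr0 mul0r andbF mulr0.
have E : {near (dnbhs (0:R)), (fun h : R => h^-1 *: ((phi M \o shift 0) (h *: v) - phi M 0))
          =1 (fun h => (m / (a * h + d)) *: v)}.
  near=> h; have h0 : h != 0 by near: h; exact: nbhs_dnbhs_neq.
  rewrite /= addr0 phi0 subr0 Hphi scalerA; congr (_ *: _).
  by rewrite [m * h]mulrC -!mulrA mulKf.
have C1 : (fun h : R => h^-1 *: ((phi M \o shift 0) (h *: v) - phi M 0)) @ (dnbhs (0:R)) --> 'D_v (phi M) 0.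
  exact: der.
rewrite Dv in C1.
have C2 : (fun h : R => (m / (a * h + d)) *: v) @ (dnbhs (0:R)) --> (m / (a * 0 + d)) *: v.
  apply: cvgZl; apply: cvgM; first exact: cvg_cst.
  apply: cvgV; first by rewrite mulr0 add0r.
  apply: cvgD; last exact: cvg_cst.
  apply: cvgMr. exact: cvg_within.
have C3 := cvg_trans (near_eq_cvg E) C1.
have {}C3 := C3 (dnbhs_filter _).
have Heq : (m / (a * 0 + d)) *: v = v.
  apply: (cvg_unique _ C2 C3) => //; exact: norm_hausdorff.
have := congr1 (fun w : 'rV[R]_3 => w 0 i) Heq; rewrite !mxE !eqxx /= mulr1 mulr0 add0r.
by move=> /(congr1 (fun t => t * d)); rewrite mulfVK // mul1r.
Unshelve. all: by end_near. Qed.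

Lemma bump_small (x : 'I_3) : bump 3 x = x.
Proof. by rewrite /bump leqNgt ltn_ord. Qed.

Lemma ne3 (x : 'I_3) : (nat_of_ord x == 3%N) = false.
Proof. by rewrite ltn_eqF. Qed.

Lemma w0E (M : 'M[R]_4) i : wvec M 0 i 0 = M i ord_max.
Proof. by rewrite wvecE big1 ?add0r // => j _; rewrite mxE mulr0. Qed.

End S.

Theorem mainTheorem1 (R : realType) (M : 'M[R]_4) :
  M \in unitmx ->
  (* (1) *)
  phi_defined M 0 -> phi M 0 = 0 ->
  (* (2) *)
  (forall (k : 'I_3) (x : 'rV[R]_3),
      on_axis k x -> phi_defined M x -> on_axis k (phi M x)) ->
  (* (3) *)
  (forall x : 'rV[R]_3, 0 <= x 0 zidx -> phi_defined M x) ->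
  (* (4) *)
  differentiable (phi M) 0 -> (forall v : 'rV[R]_3, 'd (phi M) 0 v = v) ->
  exists (lam c : R), lam != 0 /\ 0 <= c /\ M = lam *: Mc c.
Proof.
move=> _ def0 phi0 Hax Hhalf dif dv.
set d := M ord_max ord_max.
have d0 : d != 0 by move: def0; rewrite /phi_defined /w4 w0E.
have Hcol : forall j, M (lift ord_max j) ord_max = 0.
  move=> j; have := congr1 (fun w : 'rV[R]_3 => w 0 j) phi0.
  rewrite /= phiE /w4 !w0E mxE => /eqP; rewrite mulf_eq0 invr_eq0 (negPf d0) orbF.
  by move/eqP.
have Hoff : forall k j, j != k -> M (lift ord_max j) (lift ord_max k) = 0.
  move=> k j jk.
  set a := M ord_max (lift ord_max k).
  have [t [t0 wt]] : exists t : R, t != 0 /\ a * t + d != 0.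
    have [ad|ad] := eqVneq (a * 1 + d) 0.
      exists 2; split; first by rewrite pnatr_eq0.
      have e2 : a * 2 + d = (a * 1 + d) + a by ring.
      rewrite e2 ad add0r.
      apply/eqP => a0; move: ad; rewrite a0 mul0r add0r => /eqP; by rewrite (negPf d0).
    by exists 1; split; rewrite ?oner_eq0.
  have ax : on_axis k (t *: delta_mx 0 k).
    by move=> j' j'k; rewrite !mxE (negPf j'k) andbF mulr0.
  have df : phi_defined M (t *: delta_mx 0 k).
    by rewrite /phi_defined /w4 wdelta.
  have := Hax k _ ax df j jk.
  rewrite phiE /w4 !wdelta Hcol addr0 => /eqP; rewrite mulf_eq0 invr_eq0 (negPf wt) orbF.
  by rewrite mulf_eq0 (negPf t0) orbF => /eqP.
have Hdiag : forall i, M (lift ord_max i) (lift ord_max i) = d.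
  move=> i; apply: diag_eq => //; first by move=> j; exact: Hoff.
have Hrow : forall k, k != zidx -> M ord_max (lift ord_max k) = 0.
  move=> k kz; apply/eqP; apply/negPn/negP => a0.
  have := Hhalf ((- d / M ord_max (lift ord_max k)) *: delta_mx 0 k).
  rewrite !mxE eq_sym (negPf kz) andbF mulr0 lexx /phi_defined /w4 wdelta.
  by rewrite mulrCA mulfV // mulr1 addNr eqxx => /(_ isT).
set c := M ord_max (lift ord_max zidx).
have c0 : 0 <= c / d.
  rewrite leNgt; apply/negP => cd.
  have cn0 : c != 0 by apply: contraTneq cd => ->; rewrite mul0r ltxx.
  have := Hhalf ((- (c / d)^-1) *: delta_mx 0 zidx).
  rewrite !mxE !eqxx mulr1 oppr_ge0 invr_le0 (ltW cd) /phi_defined /w4 wdelta.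
  rewrite invf_div mulrN mulrCA mulfV // mulr1 addNr eqxx => /(_ isT).
  by [].
exists d, (c / d); split => //; split => //.
have lv (x : 'I_3) : val (lift (@ord_max 3) x) = val x := lift_max x.
apply/matrixP => i j; rewrite !mxE.
case: (unliftP ord_max i) => [i'|] ->; case: (unliftP ord_max j) => [j'|] ->.
- rewrite (inj_eq (@lift_inj _ ord_max)).
  have [->|ij] := eqVneq i' j'; first by rewrite Hdiag mulr1.
  rewrite Hoff //.
  by rewrite /= !bump_small ne3 mulr0.
- rewrite eq_sym (negPf (neq_lift _ _)) /= !bump_small.
  by rewrite ne3 Hcol mulr0.
- rewrite (negPf (neq_lift _ _)) /= !bump_small.
  have [->|jz] := eqVneq j' zidx; first by rewrite /= mulrC mulfVK.
  have -> : (nat_of_ord j' == 2%N) = (j' == zidx) by [].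
  by rewrite (negPf jz) Hrow // mulr0.
- by rewrite eqxx mulr1.
Qed.
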